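(* Let $n\ge 1$ and let $a_1,\dots,a_n>0$. Then, as formal power series in $z$ (with coefficients polynomials in $t$), \[ \Theta_n(z,t)=\prod_{m=1}^{n}\Big(1+\frac{a_m z}{1-a_m z t}\Big) =\exp\Big(\sum_{j=1}^{\infty}\frac{z^j}{j}\,A_n(j)\,\big(t^j-(t-1)^j\big)\Big). \] Moreover, if $t\neq 0$ and $a_1,\dots,a_n$ are pairwise distinct, then, as an identity of rational functions in $z$, \[ \Theta_n(z,t)=\frac{(t-1)^n}{t^n}+(-1)^n\sum_{j=1}^{n}\frac{\prod_{m=1}^{n}\big(\frac{1-t}{a_j t}+\frac1{a_m}\big)}{\prod_{\ell=1,\ell\ne j}^{n}\big(\frac1{a_j}-\frac1{a_\ell}\big)}\cdot\frac{1}{zt-\frac1{a_j}}. \]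
   Context: Let $\boldsymbol a=(a_j)_{j\ge1}$ be a sequence of positive reals. For integers $n\ge1$, $k\ge0$ let $\mathcal M_{n,k}=\{(\ell_1,\dots,\ell_k)\in\mathbb N^k: n\ge\ell_1\ge\ell_2\ge\cdots\ge\ell_k\ge1\}$ (the $k$-multisets of $\{1,\dots,n\}$ written as non-increasing sequences). For $\vec\ell\in\mathcal M_{n,k}$ let $\sigma(\vec\ell)=|\{1\le j\le k-1:\ell_j=\ell_{j+1}\}|$ and $w(\vec\ell)=\prod_{j=1}^k a_{\ell_j}$. Define the polynomial $\theta_{n;k}(t)=\sum_{\vec\ell\in\mathcal M_{n,k}}w(\vec\ell)\,t^{\sigma(\vec\ell)}$ (with $\theta_{n;0}(t)=1$), the generating function $\Theta_n(z,t)=\sum_{k\ge0}\theta_{n;k}(t)z^k$, and the power sums $A_n(j)=\sum_{m=1}^n a_m^j$. *)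

(* Defs.v *)
From HB Require Import structures.
From mathcomp Require Import all_boot all_order all_algebra.
Set Implicit Arguments. Unset Strict Implicit. Unset Printing Implicit Defensive.
Import Order.TTheory GRing.Theory Num.Theory.
Local Open Scope ring_scope.

Definition fps (A : Type) := nat -> A.

Section FPS.
Variable A : nzRingType.

Definition fps_const (c : A) : fps A := fun k => if k == 0%N then c else 0.
Definition fps_one : fps A := fps_const 1.
Definition fps_lin (c0 c1 : A) : fps A :=
  fun k => if k == 0%N then c0 else if k == 1%N then c1 else 0.
Definition fps_add (f g : fps A) : fps A := fun k => f k + g k.
Definition fps_scale (c : A) (f : fps A) : fps A := fun k => c * f k.
Definition fps_mul (f g : fps A) : fps A :=
  fun k => \sum_(i < k.+1) f i * g (k - i)%N.
Definition fps_pow (f : fps A) (e : nat) : fps A := iter e (fps_mul f) fps_one.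
Definition fps_prod (s : seq (fps A)) : fps A := foldr fps_mul fps_one s.
End FPS.

Section FPSInv.
Variable A : unitRingType.
(* multiplicative inverse of a power series whose constant term is a unit:
   b_0 = f_0^-1,  b_k = - f_0^-1 * sum_{i=1}^k f_i b_{k-i} *)
Fixpoint fps_inv_seq (f : fps A) (k : nat) : seq A :=
  match k with
  | 0 => [:: (f 0%N)^-1]
  | k'.+1 => let s := fps_inv_seq f k' in
      rcons s (- (f 0%N)^-1 * \sum_(i < k'.+1) f i.+1 * nth 0 s (k' - i)%N)
  end.
Definition fps_inv (f : fps A) : fps A := fun k => nth 0 (fps_inv_seq f k) k.
End FPSInv.

Section FPSExp.
Variable F : fieldType.
Variable A : lalgType F.
(* exp of a power series g with g_0 = 0 : sum_e g^e / e! (coefficient k only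
   involves e <= k) *)
Definition fps_exp (g : fps A) : fps A :=
  fun k => \sum_(e < k.+1) ((e`!)%:R^-1 : F) *: fps_pow g e k.
End FPSExp.

Section Theta.
Variable R : realFieldType.
Variable a : nat -> R.   (* a_j for j >= 1; a 0 is unused *)

(* l : k.-tuple 'I_n encodes (l_1,...,l_k) with l_j = val (l j) + 1 *)
Definition noninc {n : nat} (s : seq 'I_n) : bool :=
  sorted (fun x y : 'I_n => (y <= x)%N) s.

Definition sigma {n k : nat} (l : k.-tuple 'I_n) : nat :=
  let s := map (@nat_of_ord n) l in
  \sum_(j < k.-1) ((nth 0%N s j == nth 0%N s j.+1) : nat).

Definition weight {n k : nat} (l : k.-tuple 'I_n) : R :=
  \prod_(i <- l) a (val i).+1.

Definition theta (n k : nat) : {poly R} :=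
  \sum_(l : k.-tuple 'I_n | noninc l) (weight l *: 'X^(sigma l)).

Definition Theta (n : nat) : fps {poly R} := fun k => theta n k.

Definition Apow (n j : nat) : R := \sum_(1 <= m < n.+1) a m ^+ j.
End Theta.

(* Main.v *)
Require Import Defs.
From HB Require Import structures.
From mathcomp Require Import all_boot all_order all_algebra.
From Stdlib Require Import FunctionalExtensionality.
From mathcomp Require Import zify ring.
Import Order.TTheory GRing.Theory Num.Theory.
Local Open Scope ring_scope.
Set Implicit Arguments. Unset Strict Implicit. Unset Printing Implicit Defensive.


Section Gen.
Variable A : comNzRingType.
Implicit Types f g h : fps A.

Lemma fps_mul_poly f g (p q : {poly A}) k :
  (forall i, (i <= k)%N -> f i = p`_i) -> (forall i, (i <= k)%N -> g i = q`_i) ->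
  fps_mul f g k = (p * q)`_k.
Proof.
move=> hf hg; rewrite coefM /fps_mul; apply: eq_bigr => i _.
rewrite hf ?hg //; [exact: leq_subr | by rewrite -ltnS].
Qed.

Definition tr k f : {poly A} := \poly_(i < k.+1) f i.
Lemma tr_coef k f i : (i <= k)%N -> f i = (tr k f)`_i.
Proof. by move=> hi; rewrite coef_poly ltnS hi. Qed.

Lemma fps_mul_tr f g k : fps_mul f g k = (tr k f * tr k g)`_k.
Proof. by apply: fps_mul_poly; apply: tr_coef. Qed.

Lemma fps_mulC f g : fps_mul f g = fps_mul g f.
Proof. by apply: functional_extensionality => k; rewrite !fps_mul_tr mulrC. Qed.

Lemma fps_mulA f g h : fps_mul f (fps_mul g h) = fps_mul (fps_mul f g) h.
Proof.
apply: functional_extensionality => k.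
rewrite (@fps_mul_poly _ _ (tr k f) (tr k g * tr k h)); first last.
- move=> i hi; apply: fps_mul_poly => j hj; apply: tr_coef; exact: leq_trans hj hi.
- exact: tr_coef.
rewrite (@fps_mul_poly _ _ (tr k f * tr k g) (tr k h)) ?mulrA //; last exact: tr_coef.
move=> i hi; apply: fps_mul_poly => j hj; apply: tr_coef; exact: leq_trans hj hi.
Qed.

Lemma fps_mulDl f g h : fps_mul (fps_add f g) h = fps_add (fps_mul f h) (fps_mul g h).
Proof.
apply: functional_extensionality => k; rewrite /fps_mul /fps_add -big_split /=.
by apply: eq_bigr => i _; rewrite mulrDl.
Qed.

Lemma fps_mulDr f g h : fps_mul h (fps_add f g) = fps_add (fps_mul h f) (fps_mul h g).
Proof. by rewrite fps_mulC fps_mulDl !(fps_mulC h). Qed.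

Lemma fps_one_coef i : fps_one A i = (1 : {poly A})`_i.
Proof. by rewrite coef1 /fps_one /fps_const; case: (i == 0%N). Qed.

Lemma fps_mul1l f : fps_mul (fps_one A) f = f.
Proof.
apply: functional_extensionality => k.
rewrite (@fps_mul_poly _ _ 1 (tr k f)) ?mul1r; last exact: tr_coef.
  by rewrite -tr_coef.
by move=> i _; rewrite fps_one_coef.
Qed.

Lemma fps_mul1r f : fps_mul f (fps_one A) = f.
Proof. by rewrite fps_mulC fps_mul1l. Qed.

Lemma fps_mul0 f g : fps_mul f g 0%N = f 0%N * g 0%N.
Proof. by rewrite /fps_mul big_ord1. Qed.

Definition fD f : fps A := fun k => k%:R * f k.

Lemma fD_mul f g : fD (fps_mul f g) = fps_add (fps_mul (fD f) g) (fps_mul f (fD g)).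
Proof.
apply: functional_extensionality => k; rewrite /fD /fps_mul /fps_add mulr_sumr -big_split /=.
apply: eq_bigr => [[i hi]] _ /=.
have -> : (k%:R : A) = i%:R + (k - i)%:R by rewrite -natrD subnKC // -ltnS.
by rewrite mulrDl mulrA mulrCA mulrA.
Qed.

Definition ODE F h := F 0%N = 1 /\ forall k, fD F k = fps_mul h F k.

Lemma ODE_mul F G h1 h2 : ODE F h1 -> ODE G h2 -> ODE (fps_mul F G) (fps_add h1 h2).
Proof.
move=> [F0 hF] [G0 hG]; split; first by rewrite fps_mul0 F0 G0 mulr1.
have eF : fD F = fps_mul h1 F by apply: functional_extensionality.
have eG : fD G = fps_mul h2 G by apply: functional_extensionality.
move=> k; rewrite fD_mul eF eG fps_mulDl -fps_mulA (fps_mulA F h2 G) (fps_mulC F h2).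
by rewrite -fps_mulA.
Qed.

Lemma ODE_one : ODE (fps_one A) (fun _ => 0).
Proof.
split=> // k; rewrite /fD /fps_mul big1 ?mul0r //; last by move=> i _; rewrite mul0r.
by rewrite /fps_one /fps_const; case: (k =P 0%N) => [->|]; rewrite ?mulr0 ?mul0r.
Qed.

Lemma ODE_prod (I : Type) (s : seq I) (F h : I -> fps A) :
  (forall i, ODE (F i) (h i)) ->
  ODE (fps_prod [seq F i | i <- s]) (fun k => \sum_(i <- s) h i k).
Proof.
move=> hi; elim: s => [|i s IH] /=.
  have -> : (fun k => \sum_(i <- [::]) h i k) = (fun _ => 0 : A).
    by apply: functional_extensionality => k; rewrite big_nil.
  exact: ODE_one.
have -> : (fun k => \sum_(j <- i :: s) h j k) = fps_add (h i) (fun k => \sum_(j <- s) h j k).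
  by apply: functional_extensionality => k; rewrite big_cons.
exact: ODE_mul.
Qed.

Lemma ODE_unique F G h :
  (forall k (x y : A), (0 < k)%N -> k%:R * x = k%:R * y -> x = y) ->
  h 0%N = 0 -> ODE F h -> ODE G h -> forall k, F k = G k.
Proof.
move=> hinj h0 [F0 hF] [G0 hG] k; elim/ltn_ind: k => k IH.
case: k IH => [|k] IH; first by rewrite F0 G0.
apply: (hinj k.+1) => //; have := hF k.+1; have := hG k.+1; rewrite /fD => -> ->.
apply: eq_bigr => [[i hi]] _ /=; case: i hi => [|i] hi; first by rewrite h0 !mul0r.
by rewrite IH // subSS ltnS leq_subr.
Qed.

Definition fE (u : A) : fps A := fun k => u ^+ k.
Definition geo (u : A) : fps A := fun k => if k == 0%N then 0 else u ^+ k.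

Lemma ODE_E u : ODE (fE u) (geo u).
Proof.
split; first by rewrite /fE expr0.
move=> k; rewrite /fD /fps_mul big_ord_recl /= /geo /= mul0r add0r.
rewrite (eq_bigr (fun _ => u ^+ k)); last first.
  by move=> i _; rewrite /fE -exprD subnKC.
by rewrite sumr_const card_ord mulr_natl.
Qed.

Definition fL (v : A) : fps A := fps_lin 1 (- v).
Lemma ODE_L v : ODE (fL v) (fun k => - geo v k).
Proof.
split => // k; rewrite fps_mulC /fD /fps_mul.
case: k => [|k]; first by rewrite big_ord1 /geo /= !mul0r oppr0 mulr0.
rewrite big_ord_recl big_ord_recl big1 /=; last first.
  by move=> i _; rewrite /fL /fps_lin /= mul0r.
rewrite /fL /fps_lin /geo /= subn1 /= mul1r addr0.
case: k => [|k] /=; first by rewrite mul1r oppr0 mulr0 addr0.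
by rewrite mulr0 mulrN mulNr opprK subn0 !exprS addNr.
Qed.

Lemma fps_prod_rcons (s : seq (fps A)) p :
  fps_prod (rcons s p) = fps_mul p (fps_prod s).
Proof.
elim: s => [|x s IH] /=; first by [].
by rewrite IH fps_mulA (fps_mulC x) -fps_mulA.
Qed.

Lemma fps_mul_scaler f g (c : A) :
  fps_mul f (fun k => c * g k) = (fun k => c * fps_mul f g k).
Proof.
apply: functional_extensionality => k; rewrite /fps_mul mulr_sumr.
by apply: eq_bigr => i _; rewrite mulrCA.
Qed.

Lemma fps_powS g e : fps_pow g e.+1 = fps_mul g (fps_pow g e).
Proof. by []. Qed.

Lemma fps_pow_zero g e j : g 0%N = 0 -> (j < e)%N -> fps_pow g e j = 0.
Proof.
move=> g0; elim: e j => [//|e IH] j hj; rewrite fps_powS /fps_mul big1 // => [[i hi]] _ /=.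
case: i hi => [|i] hi; first by rewrite g0 mul0r.
rewrite IH ?mulr0 //; lia.
Qed.

Lemma fD_one : fD (fps_one A) = (fun _ => 0).
Proof.
apply: functional_extensionality => k; rewrite /fD /fps_one /fps_const.
by case: (k =P 0%N) => [->|]; rewrite ?mulr0 ?mul0r.
Qed.

Lemma fps_mul0r f : fps_mul f (fun _ => 0) = (fun _ => 0).
Proof. by apply: functional_extensionality => k; rewrite /fps_mul big1 // => i _; rewrite mulr0. Qed.

Lemma fD_pow g e :
  fD (fps_pow g e.+1) = (fun k => e.+1%:R * fps_mul (fD g) (fps_pow g e) k).
Proof.
elim: e => [|e IH].
  rewrite fps_powS fD_mul fD_one fps_mul0r.
  by apply: functional_extensionality => k; rewrite /fps_add addr0 mul1r.
rewrite fps_powS fD_mul IH fps_mul_scaler.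
apply: functional_extensionality => k; rewrite /fps_add.
rewrite fps_mulA (fps_mulC g) -fps_mulA -fps_powS.
by rewrite [in RHS]mulrSr mulrDl mul1r addrC.
Qed.

End Gen.

Section Exp.
Variable R : realFieldType.
Local Notation A := {poly R}.
Implicit Types f g : fps A.

Definition cfe (e : nat) : R := (e`!%:R)^-1.

Lemma exp_sum_ext g j N : g 0%N = 0 -> (j < N)%N ->
  \sum_(e < N) cfe e *: fps_pow g e j = fps_exp g j.
Proof.
move=> g0 hN; rewrite /fps_exp.
rewrite (big_ord_widen N (fun e => ((e`!)%:R^-1 : R) *: fps_pow g e j) hN).
rewrite [RHS]big_mkcond /=; apply: eq_bigr => [[e he]] _ /=.
case: ifP => // /negbT; rewrite -leqNgt => hj.
by rewrite fps_pow_zero ?scaler0.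
Qed.

Lemma ODE_exp g : g 0%N = 0 -> ODE (fps_exp g) (fD g).
Proof.
move=> g0; split.
  by rewrite /fps_exp big_ord1 /= invr1 scale1r.
move=> k; rewrite {1}/fD /fps_exp mulr_sumr big_ord_recl.
have z : k%:R * fps_pow g 0 k = 0 := congr1 (fun f => f k) (fD_one A).
rewrite [X in X + _](_ : _ = 0) ?add0r; last by rewrite -scalerAr z scaler0.
rewrite [X in X = _](_ : _ = \sum_(e < k.+1) cfe e *: fps_mul (fD g) (fps_pow g e) k); first last.
  rewrite [RHS]big_ord_recr /= [X in _ = _ + X](_ : _ = 0) ?addr0; first last.
    rewrite [X in _ *: X]/fps_mul big1 ?scaler0 // => [[i hi]] _ /=.
    case: i hi => [|i] hi; first by rewrite /fD mul0r mul0r.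
    by rewrite fps_pow_zero ?mulr0 //; lia.
  apply: eq_bigr => i _; rewrite -scalerAr -/(fD (fps_pow g i.+1) k) fD_pow.
  rewrite mulr_natl -scaler_nat scalerA /cfe factS natrM invfM.
  by rewrite mulrAC mulVf ?mul1r // pnatr_eq0.
rewrite /fps_mul.
under eq_bigr => e _ do rewrite scaler_sumr.
rewrite exchange_big /=; apply: eq_bigr => [[i hi]] _ /=.
rewrite -/(fps_exp g (k - i)%N) -(@exp_sum_ext g (k - i)%N k.+1) //; last by rewrite ltnS leq_subr.
by rewrite mulr_sumr; apply: eq_bigr => e _; rewrite scalerAr.
Qed.

Lemma polyR_inj k (x y : A) : (0 < k)%N -> k%:R * x = k%:R * y -> x = y.
Proof.
move=> hk; apply: mulfI; rewrite -polyC_natr polyC_eq0 pnatr_eq0; lia.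
Qed.

End Exp.


Fixpoint sg (s : seq nat) : nat :=
  match s with
  | x :: ((y :: _) as s') => ((x == y) + sg s')%N
  | _ => 0%N
  end.

Lemma sum_sg (s : seq nat) :
  (\sum_(j < (size s).-1) (nth 0%N s j == nth 0%N s j.+1 : nat))%N = sg s.
Proof.
elim: s => [|x s IH]; first by rewrite big_ord0.
case: s IH => [|y s] IH; first by rewrite big_ord0.
rewrite big_ord_recl /=; congr addn; rewrite -[RHS]IH; apply: eq_bigr => i _; by rewrite add0n.
Qed.

Lemma big_tuple_cons (V : nmodType) (T : finType) k (P : pred (k.+1.-tuple T))
    (F : k.+1.-tuple T -> V) :
  \sum_(l | P l) F l =
  \sum_(x : T) \sum_(l : k.-tuple T | P [tuple of x :: l]) F [tuple of x :: l].
Proof.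
rewrite pair_big_dep /=.
pose h (p : T * k.-tuple T) : k.+1.-tuple T := [tuple of p.1 :: p.2].
pose h' (l : k.+1.-tuple T) : T * k.-tuple T := (thead l, [tuple of behead l]).
rewrite (reindex h) /=; last first.
  exists h' => [[x l] _|l _]; rewrite /h /h' /=.
    by rewrite theadE; congr pair; apply: val_inj.
  by rewrite -tuple_eta.
by [].
Qed.

Section Comb.
Variables (R : realFieldType) (a : nat -> R) (n : nat).
Local Notation T := 'I_n.

Definition ws (s : seq T) : R := \prod_(i <- s) a i.+1.
Definition term (s : seq T) : {poly R} := ws s *: 'X^(sg (map val s)).

Lemma theta_term k : theta a n k = \sum_(l : k.-tuple T | noninc l) term l.
Proof.
apply: eq_bigr => l _; rewrite /term /weight /ws; congr (_ *: 'X^_).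
by rewrite /sigma -sum_sg size_map size_tuple.
Qed.

Definition H k (x : T) := \sum_(l : k.-tuple T | noninc (x :: l)) term (x :: l).

Lemma theta_S k : theta a n k.+1 = \sum_(x : T) H k x.
Proof. by rewrite theta_term big_tuple_cons. Qed.

Lemma theta_0 : theta a n 0 = 1.
Proof.
rewrite theta_term (big_pred1 [tuple]); last by move=> l /=; rewrite (_ : l == [tuple]); [rewrite (tuple0 l) | apply/eqP; exact: tuple0].
by rewrite /term /ws big_nil scale1r expr0.
Qed.

Lemma H0 x : H 0 x = a x.+1 *: 1.
Proof.
rewrite /H (big_pred1 [tuple]); last by move=> l /=; rewrite (_ : l == [tuple]); [rewrite (tuple0 l) | apply/eqP; exact: tuple0].
by rewrite /term /ws big_seq1 expr0.
Qed.

Lemma HS k x :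
  H k.+1 x = a x.+1 *: (\sum_(y : T | (y < x)%N) H k y + 'X * H k x).
Proof.
rewrite /H big_tuple_cons.
have e1 : forall y : T, \sum_(l : k.-tuple T | noninc [:: x, y & l]) term [:: x, y & l]
   = if (y <= x)%N then a x.+1 *: ('X^(x == y :> nat) * H k y) else 0.
  move=> y; rewrite (eq_bigl (fun l : k.-tuple T => (y <= x)%N && noninc (y :: l))) //.
  case: (y <= x)%N; last by rewrite big_pred0.
  rewrite mulr_sumr scaler_sumr; apply: eq_bigr => l _.
  by rewrite /term /ws big_cons /= exprD -scalerA scalerAr.
rewrite (eq_bigr _ (fun y _ => e1 y)) -big_mkcond /=.
rewrite (bigD1 x) //= eqxx expr1 addrC scalerDr; congr (_ + _).
rewrite scaler_sumr; apply: eq_big => y.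
  by rewrite ltn_neqAle andbC.
move=> /andP [_ hne]; rewrite (_ : (x == y :> nat) = false) ?expr0 ?mul1r //.
by apply/negbTE; rewrite eq_sym.
Qed.

Definition Pm (c : R) : fps {poly R} :=
  fun k => if k == 0%N then 1 else c ^+ k *: 'X^(k.-1).
Definition S (v : nat) : fps {poly R} :=
  fun k => if k is k'.+1 then \sum_(y : T | (y < v)%N) H k' y else 1.

Lemma H_closed v (hv : (v < n)%N) k :
  H k (Ordinal hv) = \sum_(i < k.+1) (a v.+1 ^+ i.+1 *: 'X^i) * S v (k - i)%N.
Proof.
elim: k => [|k IH].
  by rewrite H0 big_ord1 /= expr1 expr0 mulr1.
rewrite HS IH [RHS]big_ord_recl /= scalerDr expr1 expr0 -scalerAl mul1r; congr (_ + _).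
rewrite mulr_sumr scaler_sumr; apply: eq_bigr => i _.
rewrite /bump /= add1n subSS -!scalerAl -scalerAr scalerA -exprS.
by rewrite mulrA -exprS.
Qed.

Lemma S_step v (hv : (v < n)%N) : S v.+1 = fps_mul (Pm (a v.+1)) (S v).
Proof.
apply: functional_extensionality => k; case: k => [|k].
  by rewrite fps_mul0 /S /Pm /= mul1r.
rewrite /fps_mul big_ord_recl /= {1}/Pm /= mul1r.
rewrite (bigD1 (Ordinal hv)) //= addrC; congr (_ + _).
  apply: eq_bigl => y; have -> : (y != Ordinal hv) = (val y != v) by [].
  by rewrite ltnS; case: ltngtP.
rewrite (H_closed hv); apply: eq_bigr => i _.
by rewrite /Pm /bump /= add1n subSS.
Qed.

Lemma S_prod v : (v <= n)%N -> S v = fps_prod [seq Pm (a m) | m <- iota 1 v].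
Proof.
elim: v => [|v IH] hv.
  apply: functional_extensionality => k; case: k => [|k] //.
  by rewrite /S /= big_pred0.
rewrite S_step // IH; last exact: ltnW.
by rewrite -addn1 iotaD map_cat cats1 fps_prod_rcons add1n addn1.
Qed.

Lemma Theta_prod k : Theta a n k = fps_prod [seq Pm (a m) | m <- iota 1 n] k.
Proof.
rewrite -S_prod // /Theta; case: k => [|k]; first exact: theta_0.
by rewrite theta_S /S; apply: eq_bigl => y; rewrite ltn_ord.
Qed.

End Comb.


Lemma fps_inv_seq_lin (B : comUnitRingType) (c0 c1 : B) k :
  fps_inv_seq (fps_lin c0 c1) k = mkseq (fun i => c0^-1 * (- c1 * c0^-1) ^+ i) k.+1.
Proof.
elim: k => [|k IH]; first by rewrite /mkseq /= expr0 mulr1.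
rewrite /= IH [in RHS]mkseqS; congr rcons.
rewrite big_ord_recl big1 ?addr0 /=; last first.
  by move=> i _; rewrite /fps_lin /= mul0r.
rewrite /fps_lin /= subn0 nth_mkseq // exprS; ring.
Qed.

Lemma fps_inv_lin (B : comUnitRingType) (c0 c1 : B) k :
  fps_inv (fps_lin c0 c1) k = c0^-1 * (- c1 * c0^-1) ^+ k.
Proof. by rewrite /fps_inv fps_inv_seq_lin nth_mkseq. Qed.

Lemma aux_PmEL (B : comNzRingType) (x y : B) k :
  y ^+ k.+1 * x ^+ k = y ^+ k.+1 * x ^+ k.+1 + - (y * (x - 1)) * (y ^+ k * x ^+ k).
Proof. rewrite !exprS; ring. Qed.

Section P1.
Variable R : realFieldType.

Lemma factor_Pm (c : R) :
  fps_add (fps_one _) (fps_mul (fps_lin 0 c%:P) (fps_inv (fps_lin 1 (- (c *: 'X)))))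
  = Pm c.
Proof.
apply: functional_extensionality => k; rewrite /fps_add /Pm.
case: k => [|k]; first by rewrite fps_mul0 /fps_lin /= mul0r addr0.
rewrite /fps_mul big_ord_recl big_ord_recl big1 /=; last first.
  by move=> i _; rewrite /fps_lin /= mul0r.
rewrite /fps_lin /= !fps_inv_lin invr1 !mulr1 opprK mul1r mul0r add0r addr0 subn1 /=.
by rewrite exprZn mul_polyC add0r mul1r scalerA -exprS.
Qed.

Lemma Pm_EL (c : R) : Pm c = fps_mul (fE (c *: 'X)) (fL (c *: ('X - 1))).
Proof.
apply: functional_extensionality => k; rewrite fps_mulC /Pm.
case: k => [|k]; first by rewrite fps_mul0 /fL /fps_lin /fE /= mulr1.
rewrite /fps_mul big_ord_recl big_ord_recl big1 /=; last first.
  by move=> i _; rewrite /fL /fps_lin /= mul0r.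
rewrite /fL /fps_lin /fE /= subn0 subn1 /= mul1r addr0 !exprZn -!mul_polyC.
rewrite !rmorphXn /=; exact: aux_PmEL.
Qed.

End P1.

Section P1b.
Variables (R : realFieldType) (a : nat -> R) (n : nat).

Lemma part1a k :
  Theta a n k =
  fps_prod [seq fps_add (fps_one _)
              (fps_mul (fps_lin 0 (a m)%:P) (fps_inv (fps_lin 1 (- (a m *: 'X)))))
           | m <- iota 1 n] k.
Proof.
rewrite Theta_prod; congr (fps_prod _ k); apply: eq_map => m.
by rewrite factor_Pm.
Qed.

Definition gexp : fps {poly R} := fun j : nat =>
  if j == 0%N then 0
  else ((j%:R)^-1 * Apow a n j) *: ('X ^+ j - ('X - 1) ^+ j).

Lemma Apow_iota j : Apow a n j = \sum_(m <- iota 1 n) a m ^+ j.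
Proof. by rewrite /Apow /index_iota subn1. Qed.

Lemma part1b k : Theta a n k = fps_exp gexp k.
Proof.
have g0 : gexp 0%N = 0 by [].
rewrite Theta_prod; apply: (@ODE_unique _ _ _ (fD gexp) (@polyR_inj R)).
- by rewrite /fD mul0r.
- have := @ODE_prod _ _ (iota 1 n) (fun m => Pm (a m))
     (fun m => fps_add (geo (a m *: 'X)) (fun k => - geo (a m *: ('X - 1)) k)).
  have -> : (fun k => \sum_(m <- iota 1 n)
      fps_add (geo (a m *: 'X)) (fun k => - geo (a m *: ('X - 1)) k) k) = fD gexp.
    apply: functional_extensionality => j; rewrite /fD /gexp /fps_add /geo.
    case: j => [|j] /=.
      by rewrite mul0r big1 // => m _; rewrite oppr0 addr0.
    rewrite mulr_natl -scaler_nat scalerA mulrA mulfV ?pnatr_eq0 // mul1r.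
    rewrite Apow_iota scaler_suml; apply: eq_bigr => m _.
    by rewrite !exprZn scalerBr.
  apply=> m; rewrite Pm_EL; apply: ODE_mul; [exact: ODE_E | exact: ODE_L].
- exact: ODE_exp.
Qed.

End P1b.


Section Gen2.
Variable B : comNzRingType.
Implicit Types f g : fps B.

Definition cf (p : {poly B}) : fps B := fun k => p`_k.

Lemma cf_mul p q : fps_mul (cf p) (cf q) = cf (p * q).
Proof. by apply: functional_extensionality => k; rewrite /cf coefM. Qed.

Lemma cf1 : cf 1 = fps_one B.
Proof. by apply: functional_extensionality => k; rewrite /cf fps_one_coef. Qed.

Lemma cf_prod (I : Type) (s : seq I) (F : I -> {poly B}) :
  fps_prod [seq cf (F i) | i <- s] = cf (\prod_(i <- s) F i).
Proof.
elim: s => [|i s IH] /=; first by rewrite big_nil cf1.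
by rewrite IH cf_mul big_cons.
Qed.

Lemma fL_cf u : fL u = cf (1 - u *: 'X).
Proof.
apply: functional_extensionality => k; rewrite /fL /fps_lin /cf coefB coef1 coefZ coefX.
by case: k => [|[|k]] /=; rewrite ?mulr0 ?mulr1 ?subr0 ?sub0r ?subrr.
Qed.

Lemma EL_one u : fps_mul (fE u) (fL u) = fps_one B.
Proof.
apply: functional_extensionality => k; rewrite fps_mulC.
case: k => [|k]; first by rewrite fps_mul0 /fL /fps_lin /fE /= mulr1.
rewrite /fps_mul big_ord_recl big_ord_recl big1 /=; last first.
  by move=> i _; rewrite /fL /fps_lin /= mul0r.
rewrite /fL /fps_lin /fE /fps_one /fps_const /= subn0 subn1 /= mul1r addr0.
by rewrite exprS mulNr addrN.
Qed.

Lemma fps_prod_mul2 (I : Type) (s : seq I) (F G : I -> fps B) :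
  @fps_prod B [seq fps_mul (F i) (G i) | i <- s] =
  fps_mul (@fps_prod B [seq F i | i <- s]) (@fps_prod B [seq G i | i <- s]).
Proof.
elim: s => [|i s IH] /=; first by rewrite fps_mul1l.
rewrite IH !fps_mulA; congr fps_mul.
by rewrite -!fps_mulA (fps_mulC (G i)).
Qed.

Lemma fps_cancel (F F' G : fps B) :
  (forall k, fps_mul F G k = fps_mul F' G k) -> G 0%N = 1 -> forall k, F k = F' k.
Proof.
move=> h G0 k; elim/ltn_ind: k => k IH.
have := h k; rewrite /fps_mul !big_ord_recr /= subnn G0 !mulr1.
rewrite (eq_bigr (fun i : 'I_k => F' i * G (k - i)%N)); first by move/addrI.
by move=> [i hi] _ /=; rewrite IH.
Qed.

Lemma fps_mul_constl c f : fps_mul (fps_const c) f = (fun k => c * f k).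
Proof.
apply: functional_extensionality => k; rewrite /fps_mul big_ord_recl /= subn0.
by rewrite big1 ?addr0 // => i _; rewrite /fps_const /= mul0r.
Qed.

Lemma fps_mul_scalel c f g : fps_mul (fun k => c * f k) g = (fun k => c * fps_mul f g k).
Proof. by rewrite fps_mulC fps_mul_scaler fps_mulC. Qed.

Lemma fps_mul_suml (I : Type) (s : seq I) (F : I -> fps B) g :
  fps_mul (fun k => \sum_(i <- s) F i k) g = (fun k => \sum_(i <- s) fps_mul (F i) g k).
Proof.
apply: functional_extensionality => k; rewrite /fps_mul.
under eq_bigr => j _ do rewrite mulr_suml.
by rewrite exchange_big.
Qed.

Definition ev (t : B) (f : fps {poly B}) : fps B := fun k => (f k).[t].

Lemma ev_mul t (f g : fps {poly B}) : ev t (fps_mul f g) = fps_mul (ev t f) (ev t g).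
Proof.
apply: functional_extensionality => k; rewrite /ev /fps_mul horner_sum.
by apply: eq_bigr => i _; rewrite hornerM.
Qed.

Lemma ev_one t : ev t (fps_one _) = fps_one B.
Proof.
apply: functional_extensionality => k; rewrite /ev /fps_one /fps_const.
by case: (k == 0%N); rewrite hornerC.
Qed.

Lemma ev_prod t (I : Type) (s : seq I) (F : I -> fps {poly B}) :
  ev t (fps_prod [seq F i | i <- s]) = fps_prod [seq ev t (F i) | i <- s].
Proof.
elim: s => [|i s IH] /=; first exact: ev_one.
by rewrite ev_mul IH.
Qed.

End Gen2.


Lemma hornerL (F : comNzRingType) (u z : F) : (1 - u *: 'X).[z] = 1 - u * z.
Proof. by rewrite hornerD hornerN hornerZ hornerX hornerC. Qed.

Lemma coef_linmul (F : comNzRingType) (u : F) (p : {poly F}) j :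
  ((1 - u *: 'X) * p)`_j = p`_j - u * (if j == 0%N then 0 else p`_j.-1).
Proof. by rewrite mulrBl mul1r coefB -scalerAl coefZ coefXM. Qed.

Lemma lin_prod (F : comNzRingType) (s : seq F) :
  leq (size (\prod_(u <- s) (1 - u *: 'X))) (size s).+1 /\
  (\prod_(u <- s) (1 - u *: 'X))`_(size s) = \prod_(u <- s) (- u).
Proof.
elim: s => [|u s [IH1 IH2]]; first by rewrite !big_nil size_poly1 coef1.
rewrite !big_cons; split.
  apply/leq_sizeP => j hj; rewrite coef_linmul /=.
  have h1 : forall i, ((size s).+1 <= i)%N -> (\prod_(u <- s) (1 - u *: 'X))`_i = 0.
    by move/leq_sizeP: IH1.
  case: j hj => [//|j] hj /=; rewrite /= in hj; rewrite !h1 ?mulr0 ?subr0 //; lia.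
rewrite coef_linmul /= IH2.
have /leq_sizeP -> // := IH1.
by rewrite sub0r mulNr.
Qed.

Lemma lin_prod_map (F : comNzRingType) (I : Type) (s : seq I) (f : I -> F) :
  leq (size (\prod_(m <- s) (1 - f m *: 'X))) (size s).+1 /\
  (\prod_(m <- s) (1 - f m *: 'X))`_(size s) = \prod_(m <- s) (- f m).
Proof. by have := lin_prod (map f s); rewrite !big_map size_map. Qed.

Lemma alg_ident (F : fieldType) (sg PX PY PA PN aj : F) : PY != 0 -> sg * sg = 1 ->
  - aj * PN = sg * PA -> PA * PX = (sg * (PX / PY) * - aj) * (PN * PY).
Proof.
move=> hY hs hN.
transitivity (sg * PX * (- aj * PN) * (PY / PY)); last by ring.
rewrite mulfV // mulr1 hN.
transitivity (sg * sg * PA * PX); last by ring.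
by rewrite hs mul1r.
Qed.

Lemma alg2 (F : fieldType) (sg x y P : F) : y != 0 -> sg * x * P = x / y * (sg * y * P).
Proof.
move=> hy; transitivity (sg * x * P * (y / y)); first by rewrite mulfV // mulr1.
by ring.
Qed.

Lemma fid1 (F : fieldType) (am aj t : F) : am != 0 ->
  1 - am * (t - 1) * (aj * t)^-1 = am * ((1 - t) / (aj * t) + am^-1).
Proof. move=> h; rewrite [RHS]mulrDr (mulfV h); ring. Qed.

Lemma fid2 (F : fieldType) (am aj t : F) : am != 0 -> aj != 0 -> t != 0 ->
  1 - am * t * (aj * t)^-1 = - am * (aj^-1 - am^-1).
Proof.
move=> h1 h2 h3; rewrite invfM.
transitivity (1 - am * aj^-1 * (t / t)); first by ring.
rewrite (mulfV h3) mulr1 mulrBr mulNr mulNr opprK (mulfV h1); ring.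
Qed.

Section P2.
Variables (R : realFieldType) (a : nat -> R) (n : nat) (t : R).
Hypothesis ht : t != 0.
Hypothesis ha : forall m, (1 <= m <= n)%N -> a m != 0.
Hypothesis hdist : forall i j : nat, (1 <= i <= n)%N -> (1 <= j <= n)%N -> a i = a j -> i = j.

Local Notation r := (index_iota 1 n.+1).

Lemma iota_r : iota 1 n = r.
Proof. by rewrite /index_iota subn1. Qed.

Lemma mem_r j : (j \in r) = (1 <= j <= n)%N.
Proof. by rewrite mem_index_iota ltnS. Qed.

Definition Cc := (t - 1) ^+ n / t ^+ n.
Definition cj j := \prod_(1 <= m < n.+1) ((1 - t) / (a j * t) + (a m)^-1)
          / \prod_(1 <= l < n.+1 | l != j) ((a j)^-1 - (a l)^-1).
Definition Qp := \prod_(m <- r) (1 - (a m * t) *: 'X).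
Definition Np := \prod_(m <- r) (1 - (a m * (t - 1)) *: 'X).
Definition Qj j := \prod_(m <- r | m != j) (1 - (a m * t) *: 'X).
Definition Rp := Cc *: Qp + \sum_(j <- r) ((-1) ^+ n * cj j * - a j) *: Qj j.
Definition rhs := fps_add (fps_const Cc) (fps_scale ((-1) ^+ n)
            (fun k' => \sum_(1 <= j < n.+1) cj j * fps_inv (fps_lin (- (a j)^-1) t) k')).

Lemma ev_Pm c : ev t (Pm c) = fps_mul (fE (c * t)) (fL (c * (t - 1))).
Proof.
rewrite Pm_EL ev_mul; congr fps_mul; apply: functional_extensionality => k.
  by rewrite /ev /fE exprZn hornerZ hornerXn exprMn.
rewrite /ev /fL /fps_lin; case: k => [|[|k]] /=; rewrite ?hornerC //.
by rewrite hornerN hornerZ hornerD hornerN hornerX hornerC.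
Qed.

Lemma lhs_eq k : (Theta a n k).[t] =
  fps_prod [seq fps_mul (fE (a m * t)) (fL (a m * (t - 1))) | m <- r] k.
Proof.
rewrite Theta_prod iota_r -/(ev t _ k) ev_prod.
by congr (fps_prod _ k); apply: eq_map => m; rewrite ev_Pm.
Qed.

Lemma lhsQ : fps_mul (fps_prod [seq fps_mul (fE (a m * t)) (fL (a m * (t - 1))) | m <- r])
   (cf Qp) = cf Np.
Proof.
have eQ : cf Qp = fps_prod [seq fL (a m * t) | m <- r].
  by rewrite /Qp -cf_prod; congr fps_prod; apply: eq_map => m; rewrite fL_cf.
have eN : cf Np = fps_prod [seq fL (a m * (t - 1)) | m <- r].
  by rewrite /Np -cf_prod; congr fps_prod; apply: eq_map => m; rewrite fL_cf.
rewrite eQ eN -fps_prod_mul2; congr fps_prod; apply: eq_map => m /=.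
by rewrite -fps_mulA (fps_mulC (fL _)) fps_mulA EL_one fps_mul1l.
Qed.

Lemma inv_eq j : a j != 0 ->
  fps_inv (fps_lin (- (a j)^-1) t) = (fun k => - a j * fE (a j * t) k).
Proof.
move=> hj; apply: functional_extensionality => k.
by rewrite fps_inv_lin invrN invrK /fE mulrNN (mulrC t).
Qed.

Lemma EQ j : j \in r -> fps_mul (fE (a j * t)) (cf Qp) = cf (Qj j).
Proof.
move=> hj; rewrite /Qp (bigD1_seq j) ?iota_uniq //= -cf_mul -fL_cf fps_mulA EL_one.
by rewrite fps_mul1l.
Qed.

Lemma rhsQ : fps_mul rhs (cf Qp) = cf Rp.
Proof.
rewrite /rhs fps_mulDl fps_mul_constl /fps_scale fps_mul_scalel fps_mul_suml.
apply: functional_extensionality => k.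
rewrite /fps_add /cf /Rp coefD coefZ coef_sum; congr (_ + _).
rewrite mulr_sumr; apply: eq_big_seq => j hj.
have hj0 : a j != 0 by apply: ha; rewrite -mem_r.
rewrite inv_eq // fps_mul_scalel fps_mul_scalel EQ // coefZ /cf.
by rewrite !mulrA.
Qed.


Lemma Qp0 : Qp`_0 = 1.
Proof.
rewrite -horner_coef0 /Qp horner_prod big1 // => m _.
by rewrite hornerL mulr0 subr0.
Qed.

Lemma prodNa : \prod_(m <- r) (- a m) = (-1) ^+ n * \prod_(m <- r) a m.
Proof.
rewrite (eq_bigr (fun m => (-1) * a m)) => [|m _]; last by rewrite mulN1r.
by rewrite big_split /= prodr_const_nat subn1.
Qed.

Lemma prodNac c : \prod_(m <- r) (- (a m * c)) = (- c) ^+ n * \prod_(m <- r) a m.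
Proof.
rewrite (eq_bigr (fun m => (- c) * a m)) => [|m _]; last by rewrite mulNr mulrC.
by rewrite big_split /= prodr_const_nat subn1.
Qed.

Lemma size_r : size r = n.
Proof. by rewrite size_iota subn1. Qed.

Lemma size_Qj j : j \in r -> leq (size (Qj j)) n.
Proof.
move=> hj; rewrite /Qj -big_filter.
have [h _] := lin_prod_map [seq m <- r | m != j] (fun m => a m * t).
apply: leq_trans h _.
have := count_predC (pred1 j) r; rewrite size_r count_uniq_mem ?iota_uniq // hj size_filter.
have -> : count (fun m => m != j) r = count (predC (pred1 j)) r by [].
lia.
Qed.

Lemma size_D : leq (size (Np - Rp)) n.
Proof.
have [hN1 hN2] := lin_prod_map r (fun m => a m * (t - 1)).
have [hQ1 hQ2] := lin_prod_map r (fun m => a m * t).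
rewrite size_r in hN1 hN2 hQ1 hQ2.
apply/leq_sizeP => i hi; rewrite coefB /Rp coefD coefZ coef_sum.
rewrite big1_seq ?addr0; last first.
  move=> j /andP [_ hj]; have /leq_sizeP h := size_Qj hj; by rewrite coefZ h ?mulr0.
case: (eqVneq i n) => [->|hne].
  rewrite /Np /Qp hN2 hQ2 !prodNac /Cc (exprNn (t - 1)) (exprNn t).
  by apply/eqP; rewrite subr_eq0; apply/eqP; apply: alg2; rewrite expf_neq0.
have hi' : leq n.+1 i by rewrite ltn_neqAle eq_sym hne.
have /leq_sizeP h1 := hN1; have /leq_sizeP h2 := hQ1.
by rewrite /Np /Qp h1 // h2 // mulr0 subrr.
Qed.

Lemma root_D j : j \in r -> (Np - Rp).[(a j * t)^-1] = 0.
Proof.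
move=> hj; set z := (a j * t)^-1.
have hj0 : a j != 0 by apply: ha; rewrite -mem_r.
have hjt : a j * t != 0 by rewrite mulf_neq0.
have hQ : Qp.[z] = 0.
  by rewrite /Qp horner_prod (bigD1_seq j) ?iota_uniq //= hornerL mulfV // subrr mul0r.
have hQi : forall i, i \in r -> i != j -> (Qj i).[z] = 0.
  move=> i hi hij; rewrite /Qj horner_prod -big_filter (bigD1_seq j) ?filter_uniq ?iota_uniq //=.
    by rewrite hornerL mulfV // subrr mul0r.
  by rewrite mem_filter hj eq_sym hij.
rewrite hornerD hornerN /Rp hornerD hornerZ hQ mulr0 add0r horner_sum.
rewrite (bigD1_seq j) ?iota_uniq //= big1_seq ?addr0; last first.
  by move=> i /andP [hij hi]; rewrite hornerZ hQi // mulr0.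
apply/eqP; rewrite hornerZ subr_eq0; apply/eqP.
rewrite /Np /Qj !horner_prod.
rewrite (eq_big_seq (fun m => a m * ((1 - t) / (a j * t) + (a m)^-1))); last first.
  move=> m hm; rewrite hornerL fid1 //; apply: ha; by rewrite -mem_r.
have eQj : \prod_(m <- r | m != j) (1 - (a m * t) *: 'X).[z] =
    \prod_(m <- r | m != j) (- a m * ((a j)^-1 - (a m)^-1)).
  rewrite -[LHS]big_filter -[RHS]big_filter; apply: eq_big_seq => m; rewrite mem_filter => /andP [_ hm].
  rewrite hornerL fid2 //; apply: ha; by rewrite -mem_r.
rewrite eQj !big_split /= /cj.
apply: alg_ident.
- rewrite prodf_seq_neq0; apply/allP => m hm; apply/implyP => hmj.
  rewrite subr_eq0; apply/negP => /eqP e.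
  have e' := invr_inj e.
  have := hdist (j:=m) _ _ e'; rewrite -!mem_r => /(_ hj hm) hjm.
  by move: hmj; rewrite hjm eqxx.
- by rewrite -exprD -signr_odd addnn odd_double expr0.
- by rewrite -prodNa (bigD1_seq j) ?iota_uniq.
Qed.

Lemma Np_Rp : Np = Rp.
Proof.
apply/eqP; rewrite -subr_eq0; apply/negPn/negP => hD.
have := max_poly_roots hD (rs := [seq (a j * t)^-1 | j <- r]).
rewrite size_map size_r => /(_ _ _) h.
have : (n < n)%N.
  apply: leq_trans (size_D); apply: h.
    by apply/allP => z /mapP [j hj ->]; rewrite /root root_D.
  rewrite map_inj_in_uniq ?iota_uniq // => i j hi hj e.
  have e' := mulIf ht (invr_inj e).
  by apply: hdist; rewrite -?mem_r.
by rewrite ltnn.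
Qed.

Lemma part2 k : (Theta a n k).[t] = rhs k.
Proof.
rewrite lhs_eq; apply: (@fps_cancel _ _ _ (cf Qp)); last exact: Qp0.
by move=> i; rewrite lhsQ rhsQ Np_Rp.
Qed.


End P2.

Unset Implicit Arguments.

Theorem mainTheorem1 (R : realFieldType) (a : nat -> R) (n : nat)
  (hn : (1 <= n)%N) (ha : forall m : nat, (1 <= m <= n)%N -> 0 < a m) :
  (* Part 1: identities of formal power series in z over {poly R} (t = 'X) *)
  (forall k : nat,
     Theta a n k =
     fps_prod [seq fps_add (fps_one _)
                 (fps_mul (fps_lin 0 (a m)%:P)
                          (fps_inv (fps_lin 1 (- (a m *: 'X)))))
              | m <- iota 1 n] k)
  /\
  (forall k : nat,
     Theta a n k =
     fps_exp (fun j : nat =>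
        if j == 0%N then 0
        else ((j%:R)^-1 * Apow a n j) *: ('X ^+ j - ('X - 1) ^+ j)) k)
  /\
  (* Part 2: for t <> 0 and pairwise distinct a_m, identity of rational
     functions in z, compared through their power series expansions at z = 0 *)
  (forall t : R, t != 0 ->
     (forall i j : nat, (1 <= i <= n)%N -> (1 <= j <= n)%N -> a i = a j -> i = j) ->
     forall k : nat,
       (Theta a n k).[t] =
       fps_add
         (fps_const ((t - 1) ^+ n / t ^+ n))
         (fps_scale ((-1) ^+ n)
            (fun k' => \sum_(1 <= j < n.+1)
               (\prod_(1 <= m < n.+1) ((1 - t) / (a j * t) + (a m)^-1)
                / \prod_(1 <= l < n.+1 | l != j) ((a j)^-1 - (a l)^-1))
               * fps_inv (fps_lin (- (a j)^-1) t) k')) k).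
Proof.
split; first exact: part1a.
split; first exact: part1b.
move=> t ht hd k; apply: part2 => // m hm.
by rewrite lt0r_neq0 // ha.
Qed.
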